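(* Let $n\geq 1$ be an integer and let $a,b,x\in\mathbb{C}$. Then $$\sum_{k=0}^{n}\binom{n+k}{2k}C_k x^{2k}(b-x^2)^{n-k}=b\sum_{k=0}^{n-1}\binom{n-1}{k}M_k^{(a,b)}x^k(x^2-ax+b)^{n-1-k},$$ where $C_k$ is the $k$-th Catalan number and $M_k^{(a,b)}$ is the $(a,b)$-Motzkin number defined in the context.
   Context: Let $C_k=\frac{1}{k+1}\binom{2k}{k}$ be the Catalan numbers. For an integer $m\geq 0$ and $a,b\in\mathbb{C}$, the $(a,b)$-Motzkin number is $$M_m^{(a,b)}=\sum_{k=0}^{\lfloor m/2\rfloor}\binom{m}{2k}C_k a^{m-2k}b^k .$$ In particular $M_0^{(a,b)}=1$. *)

(* Defs.v *)
From mathcomp Require Import all_boot all_order all_algebra.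
From mathcomp Require Import reals complex.
Set Implicit Arguments. Unset Strict Implicit. Unset Printing Implicit Defensive.
Import GRing.Theory Num.Theory.
Local Open Scope ring_scope.

Definition catalan (k : nat) : nat := ('C(k.*2, k) %/ k.+1)%N.

Definition motzkin {R : pzRingType} (a b : R) (m : nat) : R :=
  \sum_(0 <= k < m./2.+1) ('C(m, k.*2) * catalan k)%:R * a ^+ (m - k.*2) * b ^+ k.

(* Main.v *)
Require Import Defs.
From mathcomp Require Import all_boot all_order all_algebra.
From mathcomp Require Import reals complex.
From mathcomp Require Import zify ring.
Import GRing.Theory Num.Theory.

Lemma catalanE j : catalan j * j.+1 = 'C(j.*2, j).
Proof.
have h := mul_bin_left j.*2 j.
have e : j.*2 - j = j by rewrite -addnn addnK.
rewrite e in h; rewrite /catalan.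
have -> : 'C(j.*2, j) = j.+1 * ('C(j.*2, j) - 'C(j.*2, j.+1)).
  by rewrite mulnBr h -mulnBl subSnn mul1n.
by rewrite mulKn // mulnC.
Qed.

Definition tt m j := ('C(m, j.*2) * catalan j)%N.

Lemma ttE m j : tt m j * (j`! * j.+1`!) = m ^_ (j.*2).
Proof.
rewrite /tt factS -bin_ffact.
have := bin_fact (leq_addr j j); rewrite addnK addnn => <-.
rewrite -catalanE; ring.
Qed.

Lemma ttE1 m i : tt m i * (i.+1`! * i.+2`!) = m ^_ (i.*2) * (i.+1 * i.+2).
Proof. rewrite -ttE (factS i.+1) (factS i); ring. Qed.

Lemma ff2 m i : m ^_ (i.+1.*2) = m ^_ (i.*2) * (m - i.*2) * (m - (i.*2).+1).
Proof. by rewrite doubleS !ffactnSr. Qed.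

Lemma ff2S m i : m.+1 ^_ (i.+1.*2) = m.+1 * (m ^_ (i.*2) * (m - i.*2)).
Proof. by rewrite doubleS ffactSS ffactnSr. Qed.

Lemma ff2SS m i : m.+2 ^_ (i.+1.*2) = m.+2 * m.+1 * m ^_ (i.*2).
Proof. by rewrite doubleS !ffactSS mulnA. Qed.

Lemma tt_0 m : tt m 0 = 1.
Proof. by rewrite /tt bin0. Qed.

Lemma tt_recM m j : (m + 4) * tt m.+2 j + (m + 1) * tt m j
  = (2 * m + 5) * tt m.+1 j + 4 * (m + 1) * (if j is i.+1 then tt m i else 0).
Proof.
case: j => [|i]; first by rewrite !tt_0; lia.
set F := i.+1`! * i.+2`!.
have Fp : 0 < F by rewrite muln_gt0 !fact_gt0.
apply/eqP; rewrite -(eqn_pmul2r Fp); apply/eqP.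
have e1 := ttE m.+2 i.+1; have e2 := ttE m i.+1; have e3 := ttE m.+1 i.+1.
have e4 := ttE1 m i.
transitivity ((m+4) * (tt m.+2 i.+1 * F) + (m+1) * (tt m i.+1 * F)); first ring.
rewrite e1 e2.
transitivity ((2 * m + 5) * (tt m.+1 i.+1 * F) + 4 * (m+1) * (tt m i * F)); last ring.
rewrite e3 e4 ff2SS ff2S ff2.
case: (leqP (i.*2) m) => h; last by rewrite ffact_small //; ring.
move: (m ^_ (i.*2)) => Q.
have [u ->] : exists u, m = i.*2 + u by exists (m - i.*2); rewrite subnKC.
rewrite addKn; case: u => [|u].
  by rewrite addn0 (_ : i.*2 - (i.*2).+1 = 0); [nia|lia].
rewrite (_ : i.*2 + u.+1 - (i.*2).+1 = u); [nia|lia].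
Qed.

Lemma tt_recS n k : (n + 3) * tt (n.+2 + k) k + n * tt (n + k) k
  = (2 * n + 3) * (tt (n.+1 + k) k + 2 * (if k is i.+1 then tt (n.+1 + i) i else 0)).
Proof.
case: k => [|i]; first by rewrite !tt_0; lia.
have -> : n.+2 + i.+1 = (n + i.+1).+2 by rewrite !addSn.
have -> : n.+1 + i.+1 = (n + i.+1).+1 by rewrite !addSn.
have -> : n.+1 + i = n + i.+1 by rewrite addSn addnS.
set F := i.+1`! * i.+2`!.
have Fp : 0 < F by rewrite muln_gt0 !fact_gt0.
apply/eqP; rewrite -(eqn_pmul2r Fp); apply/eqP.
move Hp : (n + i.+1) => m.
have e1 := ttE m.+2 i.+1; have e2 := ttE m i.+1; have e3 := ttE m.+1 i.+1.
have e4 := ttE1 m i.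
transitivity ((n+3) * (tt m.+2 i.+1 * F) + n * (tt m i.+1 * F)); first ring.
rewrite e1 e2.
transitivity ((2 * n + 3) * (tt m.+1 i.+1 * F) + 2 * (2 * n + 3) * (tt m i * F)); last ring.
rewrite e3 e4 ff2SS ff2S ff2.
case: (leqP (i.*2) m) => h; last by rewrite ffact_small //; ring.
move: (m ^_ (i.*2)) => Q.
have [u hu] : exists u, m = i.*2 + u by exists (m - i.*2); rewrite subnKC.
rewrite {}hu in Hp *.
clear e1 e2 e3 e4 h.
rewrite addKn; case: u Hp => [|u] Hp.
  have -> : i = n.+1 by lia.
  by rewrite muln0 mul0n !addn0 -!muln2; ring.
have -> : n = i + u by lia.
rewrite (_ : i.*2 + u.+1 - (i.*2).+1 = u); last lia.
rewrite -!muln2; ring.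
Qed.

Local Open Scope ring_scope.

Section Sums.
Variable R : comNzRingType.

Lemma sum_widen (f : nat -> R) n N : (n <= N)%N -> (forall k, (n <= k)%N -> f k = 0) ->
  \sum_(0 <= k < n) f k = \sum_(0 <= k < N) f k.
Proof.
move=> hN hf; rewrite (@big_cat_nat _ _ _ n 0 N _ _ (leq0n n) hN) /=.
rewrite [X in _ = _ + X]big_nat_cond [X in _ = _ + X]big1 ?addr0 // => k /andP[/andP[hk _] _]; exact: hf.
Qed.

Definition Schr (X Y : R) n := \sum_(0 <= k < n.+1) (tt (n + k) k)%:R * X ^+ k * Y ^+ (n - k).

Lemma tt_sch n k : (n < k)%N -> tt (n + k) k = 0%N.
Proof. by move=> h; rewrite /tt bin_small //; rewrite -addnn ltn_add2r. Qed.

Lemma Schr_wide X Y n N : (n < N)%N ->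
  Schr X Y n = \sum_(0 <= k < N) (tt (n + k) k)%:R * X ^+ k * Y ^+ (n - k).
Proof.
move=> h; rewrite /Schr (@sum_widen _ n.+1 N) // => k hk.
by rewrite tt_sch // mul0r mul0r.
Qed.

Lemma Schr_rec X Y n :
  (n + 3)%:R * Schr X Y n.+2 + n%:R * (Y ^+ 2 * Schr X Y n)
  = (2 * n + 3)%:R * (Y * Schr X Y n.+1 + 2%:R * (X * Schr X Y n.+1)).
Proof.
have hY : Y * Schr X Y n.+1 =
  \sum_(0 <= k < n.+3) (tt (n.+1 + k) k)%:R * X ^+ k * Y ^+ (n.+2 - k).
  rewrite (@Schr_wide X Y n.+1 n.+3) // big_distrr; apply: eq_bigr => k _ /=.
  case: (leqP k n.+1) => hk; first by rewrite (subSn hk) exprS; ring.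
  by rewrite tt_sch // !mul0r mulr0.
have hY2 : Y ^+ 2 * Schr X Y n =
  \sum_(0 <= k < n.+3) (tt (n + k) k)%:R * X ^+ k * Y ^+ (n.+2 - k).
  rewrite (@Schr_wide X Y n n.+3) //; last by lia. rewrite big_distrr; apply: eq_bigr => k _ /=.
  case: (leqP k n) => hk; first by rewrite (_ : (n.+2 - k = (n - k).+2)%N) ?exprS; [ring|lia].
  by rewrite tt_sch // !mul0r mulr0.
have hX : X * Schr X Y n.+1 =
  \sum_(0 <= k < n.+3) (if k is i.+1 then tt (n.+1 + i) i else 0)%:R * X ^+ k * Y ^+ (n.+2 - k).
  rewrite big_nat_recl //= mul0r mul0r add0r /Schr big_distrr; apply: eq_bigr => k _ /=.
  by rewrite subSS exprS; ring.
rewrite hY hY2 hX /Schr mulrDr !big_distrr -!big_split /=.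
apply: eq_bigr => k _.
set g := (if k is i.+1 then tt (n.+1 + i) i else 0)%N.
have h : (n + 3)%:R * (tt (n.+2 + k) k)%:R + n%:R * (tt (n + k) k)%:R
   = (2 * n + 3)%:R * ((tt (n.+1 + k) k)%:R + 2%:R * g%:R) :> R.
  by rewrite -!natrM -!natrD -natrM tt_recS.
set P := X ^+ k * Y ^+ (n.+2 - k).
transitivity (((n + 3)%:R * (tt (n.+2 + k) k)%:R + n%:R * (tt (n + k) k)%:R) * P).
  rewrite /P; ring.
rewrite h /P; ring.
Qed.

Lemma tt_small m j : (m < j.*2)%N -> tt m j = 0%N.
Proof. by move=> h; rewrite /tt bin_small. Qed.

Lemma mot_wide (a b : R) m N : (m./2 < N)%N ->
  motzkin a b m = \sum_(0 <= j < N) (tt m j)%:R * a ^+ (m - j.*2) * b ^+ j.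
Proof.
move=> h; rewrite /motzkin (@sum_widen (fun j => (tt m j)%:R * a ^+ (m - j.*2) * b ^+ j) m./2.+1 N) // => j hj.
rewrite tt_small ?mul0r //.
have := odd_double_half m; lia.
Qed.

Lemma Mot_rec (a b : R) m :
  (m + 4)%:R * motzkin a b m.+2 + (m + 1)%:R * (a ^+ 2 * motzkin a b m)
  = (2 * m + 5)%:R * (a * motzkin a b m.+1) + 4%:R * (m + 1)%:R * (b * motzkin a b m).
Proof.
have l1 : (m.+1./2 < m.+3)%N by have := odd_double_half m.+1; lia.
have l0 : (m./2 < m.+3)%N by have := odd_double_half m; lia.
have l0' : (m./2 < m.+2)%N by have := odd_double_half m; lia.
have l2 : (m.+2./2 < m.+3)%N by have := odd_double_half m.+2; lia.
have hA : a * motzkin a b m.+1 =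
  \sum_(0 <= j < m.+3) (tt m.+1 j)%:R * a ^+ (m.+2 - j.*2) * b ^+ j.
  rewrite (@mot_wide a b m.+1 m.+3) // big_distrr; apply: eq_bigr => j _ /=.
  case: (leqP (j.*2) m.+1) => hj; first by rewrite (subSn hj) exprS; ring.
  by rewrite tt_small // !mul0r mulr0.
have hA2 : a ^+ 2 * motzkin a b m =
  \sum_(0 <= j < m.+3) (tt m j)%:R * a ^+ (m.+2 - j.*2) * b ^+ j.
  rewrite (@mot_wide a b m m.+3) // big_distrr; apply: eq_bigr => j _ /=.
  case: (leqP (j.*2) m) => hj; first by rewrite (_ : (m.+2 - j.*2 = (m - j.*2).+2)%N) ?exprS; [ring|lia].
  by rewrite tt_small // !mul0r mulr0.
have hB : b * motzkin a b m =
  \sum_(0 <= j < m.+3) (if j is i.+1 then tt m i else 0)%:R * a ^+ (m.+2 - j.*2) * b ^+ j.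
  rewrite big_nat_recl //= mul0r mul0r add0r (@mot_wide a b m m.+2) // big_distrr.
  apply: eq_bigr => j _ /=.
  by rewrite doubleS !subSS exprS; ring.
rewrite hA hA2 hB (@mot_wide a b m.+2 m.+3) // !big_distrr -!big_split /=.
apply: eq_bigr => j _.
set g := (if j is i.+1 then tt m i else 0)%N.
have h : (m + 4)%:R * (tt m.+2 j)%:R + (m + 1)%:R * (tt m j)%:R
   = (2 * m + 5)%:R * (tt m.+1 j)%:R + 4%:R * (m + 1)%:R * g%:R :> R.
  by rewrite -!natrM -!natrD tt_recM.
set P := a ^+ (m.+2 - j.*2) * b ^+ j.
transitivity (((m + 4)%:R * (tt m.+2 j)%:R + (m + 1)%:R * (tt m j)%:R) * P).
  rewrite /P; ring.
rewrite h /P; ring.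
Qed.
End Sums.
Arguments Schr {R}.
Arguments Schr_rec {R}.
Arguments Mot_rec {R}.
Arguments mot_wide {R}.
Arguments Schr_wide {R}.

Lemma SchrM (F : numFieldType) (X Y : F) n :
  Schr X Y n.+1 = (X + Y) * motzkin (2%:R * X + Y) (X * (X + Y)) n.
Proof.
set a := 2%:R * X + Y; set b := X * (X + Y).
suff : Schr X Y n.+1 = (X + Y) * motzkin a b n /\ Schr X Y n.+2 = (X + Y) * motzkin a b n.+1
  by case.
elim: n => [|n [IH1 IH2]].
  rewrite /Schr /motzkin !big_nat_recr //= !big_geq //=.
  have t1 : tt (1 + 0) 0 = 1%N by [].
  have t2 : tt (1 + 1) 1 = 1%N by [].
  have t3 : ('C(0, 0.*2) * catalan 0)%N = 1%N by [].
  have t4 : tt (2 + 0) 0 = 1%N by [].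
  have t5 : tt (2 + 1) 1 = 3%N by [].
  have t6 : tt (2 + 2) 2 = 2%N by [].
  have t7 : ('C(1, 0.*2) * catalan 0)%N = 1%N by [].
  rewrite t1 t2 ?t3 t4 t5 t6 ?t7 /a /b.
  split; ring.
split => //.
have hS := Schr_rec X Y n.+1.
have hM := Mot_rec a b n.
have c0 : ((n.+1 + 3)%:R : F) != 0 by rewrite pnatr_eq0 addn3.
apply: (mulfI c0).
have e1 : (n.+1 + 3)%:R * Schr X Y n.+3 = (2 * n.+1 + 3)%:R * (Y * Schr X Y n.+2 + 2%:R * (X * Schr X Y n.+2))
   - (n.+1)%:R * (Y ^+ 2 * Schr X Y n.+1).
  by rewrite -hS; ring.
have e2 : (n + 4)%:R * motzkin a b n.+2 = (2 * n + 5)%:R * (a * motzkin a b n.+1) + 4%:R * (n + 1)%:R * (b * motzkin a b n)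
   - (n + 1)%:R * (a ^+ 2 * motzkin a b n).
  by rewrite -hM; ring.
rewrite e1 IH1 IH2.
have -> : (n.+1 + 3 = n + 4)%N by lia.
transitivity ((2 * n.+1 + 3)%:R * (Y * ((X + Y) * motzkin a b n.+1) + 2%:R * (X * ((X + Y) * motzkin a b n.+1))) -
  n.+1%:R * (Y ^+ 2 * ((X + Y) * motzkin a b n))); first by [].
transitivity ((X + Y) * ((n + 4)%:R * motzkin a b n.+2)); last by ring.
rewrite e2 /a /b; ring.
Qed.

Lemma binC N l i : (l <= N)%N -> ('C(N, i + l) * 'C(i + l, l) = 'C(N, l) * 'C(N - l, i))%N.
Proof.
move=> hl.
case: (leqP (i + l) N) => h; last first.
  have h2 : (N - l < i)%N by lia.
  by rewrite (bin_small h) mul0n (bin_small h2) muln0.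
have Fp : (0 < l`! * i`! * (N - (i + l))`!)%N by rewrite !muln_gt0 !fact_gt0.
apply/eqP; rewrite -(eqn_pmul2r Fp); apply/eqP.
have e1 := bin_fact h. have e2 := bin_fact (leq_addl i l).
have e3 := bin_fact hl.
have hi : (i <= N - l)%N by lia.
have e4 := bin_fact hi.
rewrite addnK in e2.
rewrite (_ : (N - l - i = N - (i + l))%N) in e4; last by lia.
transitivity (N`!).
  transitivity ('C(N, i + l) * (('C(i + l, l) * (l`! * i`!)) * (N - (i + l))`!))%N; first ring.
  by rewrite e2 e1.
transitivity ('C(N, l) * (l`! * ('C(N - l, i) * (i`! * (N - (i + l))`!))))%N; last ring.
by rewrite e4 e3.
Qed.

Lemma sum_shift (R : comNzRingType) (f : nat -> R) s n : (s <= n)%N ->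
  \sum_(0 <= k < n) f k = \sum_(0 <= k < s) f k + \sum_(0 <= i < n - s) f (i + s)%N.
Proof.
move=> h; rewrite (@big_cat_nat _ _ _ s 0 n _ _ (leq0n s) h) /=.
by rewrite (big_addn 0 n s xpredT).
Qed.

Lemma elim_a (R : comNzRingType) (a b x y : R) N :
  \sum_(0 <= k < N.+1) ('C(N, k))%:R * motzkin a b k * x ^+ k * y ^+ (N - k)
  = motzkin (a * x + y) (b * x ^+ 2) N.
Proof.
rewrite (@mot_wide _ _ _ N N.+1); last by have := odd_double_half N; lia.
transitivity (\sum_(0 <= k < N.+1) \sum_(0 <= j < N.+1)
   ('C(N, k))%:R * (tt k j)%:R * a ^+ (k - j.*2) * b ^+ j * x ^+ k * y ^+ (N - k)).
  apply: eq_big_nat => k hk.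
  rewrite (@mot_wide _ _ _ k N.+1); last by have := odd_double_half k; lia.
  rewrite big_distrr big_distrl big_distrl /=; apply: eq_bigr => j _; ring.
rewrite exchange_big_nat /=; apply: eq_big_nat => j hj.
case: (leqP (j.*2) N) => hjN; last first.
  rewrite tt_small // mul0r mul0r big_nat_cond big1 // => k /andP[/andP[_ hk] _].
  by rewrite tt_small ?mulr0 ?mul0r //; lia.
rewrite (@sum_shift _ _ (j.*2)); last by lia.
rewrite big_nat_cond big1 ?add0r; last first.
  by move=> k /andP[/andP[_ hk] _]; rewrite tt_small ?mulr0 ?mul0r.
rewrite addrC exprDn.
rewrite (_ : (N.+1 - j.*2 = (N - j.*2).+1)%N); last by lia.
rewrite big_mkord big_distrr big_distrl /=.
apply: eq_bigr => [[i hi]] _ /=.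
rewrite addnK (_ : (N - (i + j.*2) = N - j.*2 - i)%N); last by lia.
have e : ('C(N, i + j.*2) * tt (i + j.*2) j = tt N j * 'C(N - j.*2, i))%N.
  by rewrite /tt mulnA binC // mulnAC.
transitivity (('C(N, i + j.*2) * tt (i + j.*2) j)%:R * a ^+ i * b ^+ j * x ^+ (i + j.*2) * y ^+ (N - j.*2 - i)).
  by rewrite [in RHS]natrM.
rewrite e natrM -mul2n exprD exprM !exprMn; ring.
Qed.



Theorem theorem1p2 (R : realType) (n : nat) (a b x : R[i]) :
  (1 <= n)%N ->
  \sum_(0 <= k < n.+1) ('C(n + k, k.*2) * catalan k)%:R * x ^+ (k.*2) * (b - x ^+ 2) ^+ (n - k)
  = b * \sum_(0 <= k < n) ('C(n.-1, k))%:R * motzkin a b k * x ^+ k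
          * (x ^+ 2 - a * x + b) ^+ (n.-1 - k).
Proof.
case: n => [//|N] _ /=.
rewrite elim_a.
transitivity (Schr (x ^+ 2) (b - x ^+ 2) N.+1).
  rewrite /Schr; apply: eq_bigr => k _.
  by rewrite (_ : x ^+ (k.*2) = (x ^+ 2) ^+ k) // -mul2n exprM.
rewrite SchrM.
have -> : x ^+ 2 + (b - x ^+ 2) = b by ring.
congr (_ * motzkin _ _ _); ring.
Qed.
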